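(* Let $\mathfrak S=(S,\xrightarrow{F},\le)$ be an $\infty$-effective complete WSTS and $s_0\in S$. If the procedure $\mathbf{Clover}_{\mathfrak S}$ terminates on input $s_0$, then it returns $Clover_{\mathfrak S}(s_0)$.
   Context: A complete WSTS is a functional transition system $(S,\xrightarrow{F},\le)$ ($F$ finite set of partial maps, $s\to f(s)$ for $s\in\operatorname{dom}f$) where $(S,\le)$ is a partial order which is well (well-founded, no infinite antichain), a dcpo (every directed subset $D$ has a lub $\bigvee D$), and continuous (for every $x$, $\{y\mid y\ll x\}$ is directed with lub $x$, where $y\ll x$ iff every directed $D$ with $x\le\bigvee D$ contains an element above $y$), and each $f\in F$ is partial continuous: $\operatorname{dom}f$ is Scott-open (upward-closed and any directed $D$ with $\bigvee D$ in it meets it) and $f(\bigvee D)=\bigvee f(D)$ for directed $D\subseteq\operatorname{dom}f$. $Post(A)$: one-step successors; $Post^*$: reflexive-transitive closure; $Cover_{\mathfrak S}(s)=\downarrow Post^*(\downarrow s)$; $\operatorname{Lub}(E)=\{\bigvee D\mid D\subseteq E\text{ directed}\}$; $Clover_{\mathfrak S}(s)=\operatorname{Max}\operatorname{Lub}(Cover_{\mathfrak S}(s))$ (maximal elements). $F^*$: finite compositions of maps in $F$. Lub-acceleration: $\operatorname{dom}g^\infty=\operatorname{dom}g$; $g^\infty(x)=\bigvee_n g^n(x)$ if $x<g(x)$, else $g(x)$. $\infty$-effective: states finitely coded, $\le$ decidable, each $f\in F$ computable with decidable domain, and $g^\infty$ computable for each $g\in F^*$. Procedure $\mathbf{Clover}_{\mathfrak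 S}(s_0)$: 1. $A\leftarrow\{s_0\}$; 2. while $Post(A)\not\le^\flat A$ do (a) choose fairly $(g,a)\in F^*\times A$ with $a\in\operatorname{dom}g$; (b) $A\leftarrow A\cup\{g^\infty(a)\}$; 3. return $\operatorname{Max}A$. Here $B\le^\flat C$ iff $\downarrow B\subseteq\downarrow C$. Fairness: on every infinite execution, every pair $(g,a)\in F^*\times A_m$ (with $A_m$ the value of $A$ after $m$ iterations, $a\in\operatorname{dom}g$) is picked at some later stage. *)

(* Defs.v *)
From Stdlib Require Import List.
Import ListNotations.

Section WSTS.

Variable S : Type.
Variable le : S -> S -> Prop.

Definition lt (x y : S) : Prop := le x y /\ x <> y.

Definition is_partial_order : Prop :=
  (forall x, le x x) /\
  (forall x y z, le x y -> le y z -> le x z) /\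
  (forall x y, le x y -> le y x -> x = y).

Definition is_well : Prop :=
  well_founded lt /\
  ~ (exists f : nat -> S, forall i j, i <> j -> ~ le (f i) (f j)).

Definition directed (D : S -> Prop) : Prop :=
  (exists d, D d) /\
  (forall x y, D x -> D y -> exists z, D z /\ le x z /\ le y z).

Definition is_lub (D : S -> Prop) (l : S) : Prop :=
  (forall d, D d -> le d l) /\ (forall u, (forall d, D d -> le d u) -> le l u).

Definition is_dcpo : Prop :=
  forall D, directed D -> exists l, is_lub D l.

Definition way_below (y x : S) : Prop :=
  forall D l, directed D -> is_lub D l -> le x l -> exists d, D d /\ le y d.

Definition is_continuous : Prop :=
  forall x, directed (fun y => way_below y x) /\ is_lub (fun y => way_below y x) x.

Definition dom (f : S -> option S) (x : S) : Prop := f x <> None.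

Definition scott_open (U : S -> Prop) : Prop :=
  (forall x y, U x -> le x y -> U y) /\
  (forall D l, directed D -> is_lub D l -> U l -> exists d, D d /\ U d).

Definition partial_continuous (f : S -> option S) : Prop :=
  scott_open (dom f) /\
  (forall D l, directed D -> (forall d, D d -> dom f d) -> is_lub D l ->
     exists y, f l = Some y /\
       is_lub (fun z => exists d, D d /\ f d = Some z) y).

Definition complete_WSTS (F : list (S -> option S)) : Prop :=
  is_partial_order /\ is_well /\ is_dcpo /\ is_continuous /\
  (forall f, In f F -> partial_continuous f).

Fixpoint compose (w : list (S -> option S)) (x : S) : option S :=
  match w with
  | [] => Some x
  | f :: w' => match f x with Some y => compose w' y | None => None end
  end.

Definition in_Fstar (F : list (S -> option S)) (w : list (S -> option S)) : Prop :=
  forall f, In f w -> In f F.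

Fixpoint iter_opt (g : S -> option S) (n : nat) (x : S) : option S :=
  match n with
  | O => Some x
  | Datatypes.S n' => match iter_opt g n' x with Some y => g y | None => None end
  end.

(* lub-acceleration, as a relation: accel g x y  <->  x in dom g and g^oo(x) = y *)
Definition accel (g : S -> option S) (x y : S) : Prop :=
  exists gx, g x = Some gx /\
    ((lt x gx /\ is_lub (fun z => exists n, iter_opt g n x = Some z) y) \/
     (~ lt x gx /\ y = gx)).

(* infinity-effectiveness: states finitely coded, <= decidable, each f in F
   computable with decidable domain (f is a Rocq function with option result),
   and g^oo computable for every g in F^* *)
Definition infty_effective (F : list (S -> option S)) : Type :=
  ((exists code : S -> nat, forall x y, code x = code y -> x = y) *
   (forall x y, {le x y} + {~ le x y}) *
   { ginf : list (S -> option S) -> S -> option S |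
       forall w x, in_Fstar F w ->
         (ginf w x = None <-> compose w x = None) /\
         (forall y, ginf w x = Some y -> accel (compose w) x y) })%type.

Definition step (F : list (S -> option S)) (x y : S) : Prop :=
  exists f, In f F /\ f x = Some y.

Inductive reach (F : list (S -> option S)) : S -> S -> Prop :=
| reach_refl : forall x, reach F x x
| reach_step : forall x y z, step F x y -> reach F y z -> reach F x z.

Definition Cover (F : list (S -> option S)) (s : S) (x : S) : Prop :=
  exists y t, le y s /\ reach F y t /\ le x t.

Definition Lub (E : S -> Prop) (l : S) : Prop :=
  exists D, (forall d, D d -> E d) /\ directed D /\ is_lub D l.

Definition Max (E : S -> Prop) (x : S) : Prop :=
  E x /\ forall y, E y -> le x y -> y = x.

Definition Clover (F : list (S -> option S)) (s : S) : S -> Prop :=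
  Max (Lub (Cover F s)).

(* B <=^flat C  iff  down B subset down C, with B = Post(A) *)
Definition Post_le_flat (F : list (S -> option S)) (A : list S) : Prop :=
  forall f a b, In f F -> In a A -> f a = Some b ->
    exists c, In c A /\ le b c.

(* one iteration of the while loop: pick (g, a) in F^* x A with a in dom g,
   add g^oo(a) to A *)
Definition loop_step (F : list (S -> option S)) (A A' : list S) : Prop :=
  exists w a y, in_Fstar F w /\ In a A /\ accel (compose w) a y /\ A' = y :: A.

(* a terminating execution of Clover(s0): A 0 = {s0}, m iterations,
   loop condition true before each iteration and false at stage m *)
Definition terminating_run (F : list (S -> option S)) (s0 : S)
    (A : nat -> list S) (m : nat) : Prop :=
  A 0 = [s0] /\
  (forall k, k < m -> ~ Post_le_flat F (A k) /\ loop_step F (A k) (A (Datatypes.S k))) /\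
  Post_le_flat F (A m).

Definition returned (A : list S) : S -> Prop := Max (fun x => In x A).

End WSTS.

(* Main.v *)
Require Import Defs.
From Stdlib Require Import List Classical Arith Lia.
Import ListNotations.

Section Aux.
Variable S : Type.
Variable le : S -> S -> Prop.
Hypothesis Hpo : is_partial_order S le.

Lemma le_refl x : le x x.
Proof. destruct Hpo as [H _]; apply H. Qed.
Lemma le_trans x y z : le x y -> le y z -> le x z.
Proof. destruct Hpo as [_ [H _]]; apply H. Qed.
Lemma le_anti x y : le x y -> le y x -> x = y.
Proof. destruct Hpo as [_ [_ H]]; apply H. Qed.

Lemma mono_f (f : S -> option S) : partial_continuous S le f ->
  forall x y a, le x y -> f x = Some a -> exists b, f y = Some b /\ le a b.
Proof.
  intros [[Hup _] Hc] x y a Hxy Hfx.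
  assert (dy : dom S f y) by (apply (Hup x); [unfold dom; congruence| exact Hxy]).
  destruct (Hc (fun z => z = x \/ z = y) y) as [b [Hb [Hub _]]].
  - split. exists x; auto. intros u v Hu Hv. exists y; split; [auto|].
    split; [destruct Hu as [->| ->]|destruct Hv as [->| ->]]; auto using le_refl.
  - intros d [-> | ->]; auto. unfold dom; congruence.
  - split. intros d [-> | ->]; auto using le_refl. intros u Hu; apply Hu; auto.
  - exists b; split; auto. apply Hub. exists x; auto.
Qed.

Lemma compose_mono (w : list (S -> option S)) :
  (forall f, In f w -> partial_continuous S le f) ->
  forall x y a, le x y -> compose S w x = Some a ->
  exists b, compose S w y = Some b /\ le a b.
Proof.
  induction w as [|f w IH]; intros Hw x y a Hxy Hc; simpl in *.
  - exists y; split; auto; congruence.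
  - destruct (f x) as [fx|] eqn:E; [|discriminate].
    destruct (mono_f f (Hw f (or_introl eq_refl)) x y fx Hxy E) as [fy [E2 H2]].
    rewrite E2. eapply IH; eauto.
Qed.

Lemma wb_le z x : way_below S le z x -> le z x.
Proof.
  intros H. destruct (H (fun d => d = x) x) as [d [-> Hd]]; auto.
  - split. exists x; auto. intros u v -> ->. exists x; auto using le_refl.
  - split. intros d ->; apply le_refl. intros u Hu; auto.
  - apply le_refl.
Qed.

Lemma wb_mono z x x' : way_below S le z x -> le x x' -> way_below S le z x'.
Proof.
  intros H Hx D l Hd Hl Hle. apply (H D l Hd Hl). eapply le_trans; eauto.
Qed.

Lemma lub_bound (l : list S) (D : S -> Prop) : directed S le D ->
  (forall d, D d -> exists a, In a l /\ le d a) ->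
  exists a, In a l /\ forall d, D d -> le d a.
Proof.
  revert D. induction l as [|a l IH]; intros D Hd Hin.
  - destruct Hd as [[d Hd] _]. destruct (Hin d Hd) as [? [[] _]].
  - destruct (classic (forall d, D d -> le d a)) as [Ha|Hna].
    + exists a; split; simpl; auto.
    + apply not_all_ex_not in Hna. destruct Hna as [d0 Hd0].
      apply imply_to_and in Hd0. destruct Hd0 as [Dd0 Nd0].
      destruct (IH (fun d => D d /\ le d0 d)) as [a' [Ha' Hb]].
      * split. exists d0; split; auto using le_refl.
        intros u v [Du Hu] [Dv Hv]. destruct Hd as [_ Hd].
        destruct (Hd u v Du Dv) as [z [Dz [Huz Hvz]]].
        exists z; repeat split; eauto using le_trans.
      * intros d [Dd Hd0d]. destruct (Hin d Dd) as [c [[<-|Hc] Hdc]].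
        -- exfalso; apply Nd0; eapply le_trans; eauto.
        -- eauto.
      * exists a'; split; simpl; auto. intros d Dd.
        destruct Hd as [_ Hd]. destruct (Hd d d0 Dd Dd0) as [z [Dz [H1 H2]]].
        eapply le_trans; [exact H1|]. apply Hb; auto.
Qed.

Variable F : list (S -> option S).
Hypothesis Hpc : forall f, In f F -> partial_continuous S le f.
Hypothesis Hcont : is_continuous S le.
Variable s0 : S.

Definition C := Cover S le F s0.
Definition L := Lub S le C.

Lemma C_down x y : le x y -> C y -> C x.
Proof. intros H [a [t [H1 [H2 H3]]]]. exists a, t; repeat split; eauto using le_trans. Qed.

Lemma reach_app x y z : reach S F x y -> step S F y z -> reach S F x z.
Proof.
  induction 1; intros Hs.
  - eapply reach_step; eauto. apply reach_refl.
  - eapply reach_step; eauto.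
Qed.

Lemma C_step x f b : C x -> In f F -> f x = Some b -> C b.
Proof.
  intros [y0 [t [H1 [H2 H3]]]] Hf Hb.
  destruct (mono_f f (Hpc f Hf) x t b H3 Hb) as [b' [E Hle]].
  exists y0, b'; repeat split; auto.
  eapply reach_app; eauto. exists f; auto.
Qed.

Lemma L_lub E l : directed S le E -> (forall e, E e -> L e) -> is_lub S le E l -> L l.
Proof.
  intros [[e0 He0] Hdir] HL [Hub Hleast].
  exists (fun z => exists e, E e /\ way_below S le z e). repeat split.
  - intros z [e [Ee Hw]]. destruct (HL e Ee) as [E' [HE' [Hd' Hl']]].
    destruct (Hw E' e Hd' Hl' (le_refl e)) as [d [Dd Hzd]].
    eapply C_down; eauto.
  - destruct (Hcont e0) as [[[z Hz] _] _]. exists z, e0; auto.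
  - intros z1 z2 [e1 [E1 W1]] [e2 [E2 W2]].
    destruct (Hdir e1 e2 E1 E2) as [e3 [E3 [H1 H2]]].
    destruct (Hcont e3) as [[_ Hd3] _].
    destruct (Hd3 z1 z2 (wb_mono _ _ _ W1 H1) (wb_mono _ _ _ W2 H2)) as [z [Hz [Hz1 Hz2]]].
    exists z; repeat split; auto. exists e3; auto.
  - intros z [e [Ee W]]. eapply le_trans; [apply wb_le; eauto|]. apply Hub; auto.
  - intros u Hu. apply Hleast. intros e Ee.
    destruct (Hcont e) as [_ [_ Hl]]. apply Hl. intros z Hz. apply Hu. exists e; auto.
Qed.

Lemma L_step a f b : L a -> In f F -> f a = Some b -> L b.
Proof.
  intros [E [HE [[[e00 He00] Hdir] [Hub Hleast]]]] Hf Hfa.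
  destruct (Hpc f Hf) as [[Hup Hso] Hc].
  assert (Hda : dom S f a) by (unfold dom; congruence).
  destruct (Hso E a) as [e0 [Ee0 De0]].
  { split; [exists e00; auto| auto]. }
  { split; auto. }
  { auto. }
  destruct (Hc (fun e => E e /\ dom S f e) a) as [y [Hy Hlub]].
  - split. exists e0; auto. intros u v [Eu Du] [Ev Dv].
    destruct (Hdir u v Eu Ev) as [z [Ez [H1 H2]]].
    exists z; repeat split; eauto.
  - intros d [_ Dd]; auto.
  - split. intros d [Ed _]; auto.
    intros u Hu. apply Hleast. intros e Ee.
    destruct (Hdir e e0 Ee Ee0) as [z [Ez [H1 H2]]].
    eapply le_trans; [exact H1|]. apply Hu; split; eauto.
  - rewrite Hy in Hfa. injection Hfa as <-.
    exists (fun z => exists d, (E d /\ dom S f d) /\ f d = Some z). split; [|split; [split|]].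
    4: exact Hlub.
    + intros z [d [[Ed _] Hfd]]. eapply C_step; eauto.
    + unfold dom in De0. destruct (f e0) as [z|] eqn:Ez; [|congruence].
      exists z, e0; repeat split; auto. unfold dom; congruence.
    + intros z1 z2 [d1 [[E1 D1] F1]] [d2 [[E2 D2] F2]].
      destruct (Hdir d1 d2 E1 E2) as [d3 [E3 [H1 H2]]].
      destruct (mono_f f (Hpc f Hf) _ _ _ H1 F1) as [b1 [G1 K1]].
      destruct (mono_f f (Hpc f Hf) _ _ _ H2 F2) as [b2 [G2 K2]].
      assert (b2 = b1) by congruence. subst b2.
      exists b1; repeat split; auto. exists d3; repeat split; auto. unfold dom; congruence.
Qed.

Lemma L_compose w a b : in_Fstar S F w -> L a -> compose S w a = Some b -> L b.
Proof.
  revert a. induction w as [|f w IH]; intros a Hw La Hc; simpl in *.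
  - congruence.
  - destruct (f a) as [fa|] eqn:E; [|discriminate].
    apply (IH fa); auto.
    + intros g Hg; apply Hw; simpl; auto.
    + eapply L_step; eauto. apply Hw; simpl; auto.
Qed.

Lemma L_iter (g : S -> option S) x n z : (forall a b, L a -> g a = Some b -> L b) ->
  L x -> iter_opt S g n x = Some z -> L z.
Proof.
  intros Hg Lx. revert z. induction n as [|n IH]; intros z H; simpl in *.
  - congruence.
  - destruct (iter_opt S g n x) as [y|] eqn:E; [|discriminate]. eauto.
Qed.

Lemma iter_chain (g : S -> option S) x gx :
  (forall x y a, le x y -> g x = Some a -> exists b, g y = Some b /\ le a b) ->
  g x = Some gx -> le x gx ->
  forall n z, iter_opt S g n x = Some z ->
    exists z', iter_opt S g (Datatypes.S n) x = Some z' /\ le z z'.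
Proof.
  intros Hm Hg Hx n. induction n as [|n IH]; intros z Hz.
  - simpl in *. injection Hz as <-. exists gx; auto.
  - simpl in Hz. destruct (iter_opt S g n x) as [y|] eqn:E; [|discriminate].
    destruct (IH y eq_refl) as [z' [Hz' Hyz']].
    simpl in Hz'. rewrite E in Hz'. assert (z' = z) by congruence. subst z'.
    destruct (Hm y z z Hyz' Hz) as [b [Gb Hb]].
    exists b. simpl. rewrite E, Hz. auto.
Qed.

Lemma iter_le (g : S -> option S) x gx :
  (forall x y a, le x y -> g x = Some a -> exists b, g y = Some b /\ le a b) ->
  g x = Some gx -> le x gx ->
  forall k n z, iter_opt S g n x = Some z ->
    exists z', iter_opt S g (n + k) x = Some z' /\ le z z'.
Proof.
  intros Hm Hg Hx k. induction k as [|k IH]; intros n z Hz.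
  - rewrite Nat.add_0_r. exists z; auto using le_refl.
  - destruct (IH n z Hz) as [z' [H1 H2]].
    destruct (iter_chain g x gx Hm Hg Hx _ _ H1) as [z'' [H3 H4]].
    rewrite Nat.add_succ_r. exists z''; split; eauto using le_trans.
Qed.

Lemma L_accel w a y : in_Fstar S F w -> L a -> accel S le (compose S w) a y -> L y.
Proof.
  intros Hw La [gx [Hg [[[Hlt _] Hlub] | [_ ->]]]].
  - assert (Hm : forall x y a, le x y -> compose S w x = Some a ->
              exists b, compose S w y = Some b /\ le a b).
    { apply compose_mono. intros f Hf; apply Hpc, Hw, Hf. }
    eapply L_lub; [| | exact Hlub].
    + split. exists a, 0; reflexivity.
      intros z1 z2 [n1 H1] [n2 H2].
      destruct (iter_le _ _ _ Hm Hg Hlt n2 n1 z1 H1) as [u1 [G1 K1]].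
      destruct (iter_le _ _ _ Hm Hg Hlt n1 n2 z2 H2) as [u2 [G2 K2]].
      rewrite Nat.add_comm in G2. assert (u2 = u1) by congruence. subst u2.
      exists u1; repeat split; auto. exists (n1 + n2); auto.
    + intros e [n He]. eapply L_iter; eauto.
      intros p q Lp Hq. eapply L_compose; eauto.
  - eapply L_compose; eauto.
Qed.

End Aux.

Theorem theorem5p5 (S : Type) (le : S -> S -> Prop) (F : list (S -> option S))
  (HW : complete_WSTS S le F) (Heff : infty_effective S le F) (s0 : S)
  (A : nat -> list S) (m : nat) (Hrun : terminating_run S le F s0 A m) :
  forall x, returned S le (A m) x <-> Clover S le F s0 x.
Proof.
  destruct HW as [Hpo [_ [_ [Hcont Hpc]]]].
  destruct Hrun as [HA0 [Hloop Hfin]].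
  assert (Hsound : forall k, k <= m -> (In s0 (A k)) /\ forall x, In x (A k) -> L S le F s0 x).
  { induction k as [|k IH]; intros Hk.
    - rewrite HA0. split; [simpl; auto|]. intros x [<-|[]].
      exists (fun d => d = s0). repeat split.
      + intros d ->. exists s0, s0; repeat split; first [apply reach_refl | apply (le_refl S le Hpo)].
      + exists s0; auto.
      + intros u v -> ->. exists s0; pose proof (le_refl S le Hpo); auto.
      + intros d ->; apply (le_refl S le Hpo).
      + intros u Hu; auto.
    - destruct IH as [IH1 IH2]; [lia|].
      destruct (Hloop k ltac:(lia)) as [_ [w [a [y [Hw [Ha [Hacc ->]]]]]]].
      split; [simpl; auto|]. intros x [<-|Hx]; auto.
      eapply L_accel; eauto. }
  destruct (Hsound m (le_n m)) as [Hs0 HL].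
  assert (Hcov : forall x, C S le F s0 x -> exists c, In c (A m) /\ le x c).
  { intros x [y [t [Hy [Hr Hxt]]]].
    assert (forall y1 t1, reach S F y1 t1 -> forall a, In a (A m) -> le y1 a ->
              exists c, In c (A m) /\ le t1 c) as Hreach.
    { induction 1 as [y1|y1 y' t1 [f [Hf Hfy]] Hr1 IH]; intros a Ha Hya.
      - eauto.
      - destruct (mono_f S le Hpo f (Hpc f Hf) y1 a y' Hya Hfy) as [b [Hb Hyb]].
        destruct (Hfin f a b Hf Ha Hb) as [c [Hc Hbc]].
        apply (IH c Hc). eapply (le_trans S le Hpo); eauto. }
    destruct (Hreach y t Hr s0 Hs0 Hy) as [c [Hc Htc]].
    exists c; split; auto. eapply (le_trans S le Hpo); eauto. }
  assert (HLb : forall x, L S le F s0 x -> exists c, In c (A m) /\ le x c).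
  { intros x [D [HD [Hd Hl]]].
    destruct (lub_bound S le Hpo (A m) D Hd) as [c [Hc Hb]].
    - intros d Dd. apply Hcov, HD, Dd.
    - exists c; split; auto. apply Hl; auto. }
  intros x; split.
  - intros [Hx Hmax]. split; [apply HL; auto|].
    intros y Ly Hxy. destruct (HLb y Ly) as [c [Hc Hyc]].
    assert (c = x) by (apply Hmax; auto; eapply (le_trans S le Hpo); eauto). subst c.
    apply (le_anti S le Hpo); auto.
  - intros [Lx Hmax]. destruct (HLb x Lx) as [c [Hc Hxc]].
    assert (c = x) by (apply Hmax; [apply HL; exact Hc | exact Hxc]). subst c.
    split; auto. intros y Hy Hxy. apply Hmax; [apply HL; exact Hy | exact Hxy].
Qed.
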